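(* Let $T$ be a rooted tree (of arbitrary degree) stored in light-first order with respect to some space-filling curve, and let $\hat T$ be the virtual tree obtained from $T$ by the transformation described in the context. If every vertex of $\hat T$ is stored in the same processor as in $T$, then $\hat T$ is also stored in light-first order.
   Context: Processors sit on the cells of a 2D grid enumerated by a space-filling curve; vertex $v$ is stored at position $p_v$. For a rooted tree (real or virtual), $s(v)$ is the size of the subtree rooted at $v$; the tree is stored in light-first order if for every vertex $v$, its children can be indexed $u_1,\dots,u_m$ with $s(u_1)\le\dots\le s(u_m)$ so that $u_i$ is stored at position $p_v+1+\sum_{j<i}s(u_j)$. Virtual tree: every vertex $v$ carries an ordered list $C(v)$ of current children, initially the children of $v$ in $T$ listed in light-first order (nondecreasing subtree size, i.e. increasing position), and an ordered list $A(v)$ of appended children, initially empty. The children of $v$ in the virtual tree are the elements of $C(v)$ followed by those of $A(v)$. $\textsc{Transform}(v)$, for $C(v)=(c_1,\dots,c_d)$ and $A(v)=(a_1,\dots,a_{d'})$: (1) set $A(c_1):=(c_2,\dots,c_{\lfloor d/2\rfloor})$ and $A(c_{\lfloor d/2\rfloor+1}):=(c_{\lfloor d/2\rfloor+2},\dots,c_d)$, and set $C(v):=(c_1,c_{\lfloor d/2\rfloor+1})$; (2) set $A(a_1):=(a_2,\dots,a_{\lfloor d'/2\rfloor})$ and $A(a_{\lfloor d'/2\rfloor+1}):=(a_{\lfloor d'/2\rfloor+2},\dots,a_{d'})$, and set $A(v):=(a_1,a_{\lfloor d'/2\rfloor+1})$; (3) apply $\textsc{Transform}$ to $c_1$, $c_{\lfloor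 d/2\rfloor+1}$, $a_1$ and $a_{\lfloor d'/2\rfloor+1}$. (Index ranges with upper end below lower end are empty, repeated entries are listed once, and nonexistent elements are ignored.) $\hat T$ starts equal to $T$ and is transformed by applying $\textsc{Transform}$ starting from the root; the result is a virtual tree in which each vertex has at most 4 children. *)

(* Defs.v *)
From Stdlib Require Import List Permutation.
From mathcomp Require Import all_boot.
Set Implicit Arguments. Unset Strict Implicit. Unset Printing Implicit Defensive.

(* Rooted trees of arbitrary degree, vertices labelled by elements of V.
   The order of the [children] list carries no meaning for T itself. *)
Inductive tree (V : Type) := Node of V & seq (tree V).
Arguments Node {V} _ _.

Section Trees.
Variable V : eqType.

Definition root (t : tree V) : V := let: Node v _ := t in v.
Definition children (t : tree V) : seq (tree V) := let: Node _ cs := t in cs.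

Fixpoint tsize (t : tree V) : nat :=
  let: Node _ cs := t in (sumn (map tsize cs)).+1.

Fixpoint subtrees (t : tree V) : seq (tree V) :=
  let: Node _ cs := t in t :: flatten (map subtrees cs).

Definition vertices (t : tree V) : seq V := map root (subtrees t).

Variable p : V -> nat. (* p v = position of v along the space-filling curve *)

Definition light_first_at (t : tree V) : Prop :=
  exists us : seq (tree V),
    Permutation us (children t) /\
    sorted (fun a b => tsize a <= tsize b) us /\
    (forall us1 u us2, us = us1 ++ u :: us2 ->
       p (root u) = p (root t) + 1 + sumn (map tsize us1)).

Definition light_first (t : tree V) : Prop :=
  forall u, In u (subtrees t) -> light_first_at u.

(* C(v) initially: children of v in light-first order, i.e. by increasing position *)
Definition init_C (t : tree V) : seq (tree V) :=
  sort (fun a b => p (root a) <= p (root b)) (children t).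

(* Given a list l = (x_1,...,x_k) of (original) subtrees, with h = floor(k/2):
   the new children are x_1 (with appended list x_2..x_h) and
   x_{h+1} (with appended list x_{h+2}..x_k); repeated/nonexistent ones dropped. *)
Definition split_with (f : tree V -> seq (tree V) -> tree V) (l : seq (tree V))
  : seq (tree V) :=
  let h := (size l)./2 in
  (if take h l is x :: xs then [:: f x xs] else [::]) ++
  (if drop h l is x :: xs then [:: f x xs] else [::]).

(* vt n t A = the transformed virtual subtree rooted at (root t), where
   C(root t) = init_C t and A(root t) = A (a list of original subtrees).
   n is fuel; n >= total number of vertices of t and A is always sufficient,
   since each recursive call removes at least the current vertex. *)
Fixpoint vt (n : nat) (t : tree V) (A : seq (tree V)) : tree V :=
  match n with
  | 0 => Node (root t) [::]
  | n'.+1 => Node (root t) (split_with (vt n') (init_C t) ++ split_with (vt n') A)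
  end.

Definition virtual_tree (T : tree V) : tree V := vt (tsize T) T [::].

End Trees.

(* Main.v *)
From Stdlib Require Import List Permutation Lia.
From mathcomp Require Import all_boot zify.
Require Import Defs.
Set Implicit Arguments. Unset Strict Implicit. Unset Printing Implicit Defensive.

Lemma perm_Perm (T : eqType) (s1 s2 : seq T) : perm_eq s1 s2 -> Permutation s1 s2.
Proof.
elim: s1 s2 => [|x s1 IH] s2 H.
  have := perm_size H; case: s2 H => //= *; constructor.
have Hx : x \in s2 by rewrite -(perm_mem H) mem_head.
case/splitPr: Hx H => l r H.
apply: Permutation_cons_app; apply: IH.
have E : l ++ x :: r = l ++ [:: x] ++ r by [].
by rewrite perm_sym E perm_catCA /= perm_cons perm_sym in H.
Qed.

Lemma Perm_map (T U : Type) (f : T -> U) (l1 l2 : seq T) :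
  Permutation l1 l2 -> Permutation (map f l1) (map f l2).
Proof. elim => /=; intros; econstructor; eauto. Qed.

Lemma Perm_sort (T : Type) (leT : rel T) (s : seq T) : Permutation (sort leT s) s.
Proof.
case: s => [|x0 s']; first by constructor.
set s := x0 :: s'.
rewrite -(mkseq_nth x0 s) /mkseq sort_map.
apply: Perm_map; apply: perm_Perm; by rewrite perm_sort.
Qed.

Lemma all_In (T : Type) (P : pred T) s x : all P s -> In x s -> P x.
Proof. elim: s => //= y s IH /andP[Py Ps] [<-|H]; [exact Py| exact: IH]. Qed.

Lemma In_all (T : Type) (P : pred T) s : (forall x, In x s -> P x) -> all P s.
Proof. elim: s => //= y s IH H; rewrite H ?IH //; [move=> x Hx; apply: H|]; auto. Qed.

Lemma Perm_eq_sorted (T : Type) (f : T -> nat) (l1 l2 : seq T) :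
  Permutation l1 l2 -> sorted (fun a b => f a <= f b) l1 ->
  sorted (fun a b => f a < f b) l2 -> l1 = l2.
Proof.
elim: l1 l2 => [|x l1 IH] l2 HP S1 S2.
  by have := Permutation_nil HP.
case: l2 HP S2 => [|y l2] HP S2.
  by have := Permutation_length HP.
have Hxy : x = y.
  have Hx : In x (y :: l2) by exact: (Permutation_in _ HP (in_eq _ _)).
  case: Hx => [//|Hx].
  have Hy : In y (x :: l1) by exact: (Permutation_in _ (Permutation_sym HP) (in_eq _ _)).
  case: Hy => [//|Hy].
  have A1 := order_path_min (fun a b c (h1 : f b <= f a) (h2 : f a <= f c) => leq_trans h1 h2) S1.
  have A2 := order_path_min (fun a b c (h1 : f b < f a) (h2 : f a < f c) => ltn_trans h1 h2) S2.
  have := all_In A1 Hy; have := all_In A2 Hx => /= ??; lia.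
subst y; congr cons; apply: IH.
- exact: Permutation_cons_inv HP.
- exact: path_sorted S1.
- exact: path_sorted S2.
Qed.

Lemma In_flatten_map (T U : Type) (g : T -> seq U) (l : seq T) u :
  In u (flatten (map g l)) -> exists c, In c l /\ In u (g c).
Proof.
elim: l => //= c l IH /in_app_iff [H|H]; first by exists c; auto.
by case: (IH H) => d [? ?]; exists d; auto.
Qed.

Lemma In_flatten_map2 (T U : Type) (g : T -> seq U) (l : seq T) u c :
  In c l -> In u (g c) -> In u (flatten (map g l)).
Proof.
elim: l => //= d l IH [<-|H] Hu; apply/in_app_iff; auto.
Qed.

Lemma sumn_le_all (s : seq nat) M : all (fun y => y <= M) s -> sumn s <= size s * M.
Proof. elim: s => //= y s IH /andP[H1 H2]; have := IH H2; lia. Qed.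

Lemma sumn_ge_all (s : seq nat) M : all (fun y => M <= y) s -> size s * M <= sumn s.
Proof. elim: s => //= y s IH /andP[H1 H2]; have := IH H2; lia. Qed.

Lemma half_sum (s : seq nat) : sorted leq s ->
  sumn (take (size s)./2 s) <= sumn (drop (size s)./2 s).
Proof.
move=> S; set h := (size s)./2.
have Hh : h + h <= size s by have := odd_double_half (size s); rewrite -addnn /h; lia.
have Eh : size (take h s) = h by apply: size_takel; lia.
rewrite sorted_pairwise in S; last exact: leq_trans.
rewrite -(cat_take_drop h s) pairwise_cat in S.
case/and3P: S => AR _ PD.
case ED: (drop h s) AR PD => [|M r] AR PD.
  have : size (drop h s) = 0 by rewrite ED.
  rewrite size_drop => Hs; have -> : h = 0 by lia.
  by rewrite take0.
have HT : all (fun y => y <= M) (take h s).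
  apply/allP => y Hy; have := allP AR y Hy => /= /andP[] //.
have HR : all (fun y => M <= y) r.
  move: PD => /= /andP[H _]; exact: H.
have Sz : size (M :: r) = size s - h by rewrite -ED size_drop.
have := sumn_le_all HT; have := sumn_ge_all HR; rewrite Eh => H1 H2.
rewrite /=. move: Sz => /= Sz.
have : h * M <= (size r).+1 * M by apply: leq_mul => //; lia.
lia.
Qed.

Lemma all_le_sumn (s : seq nat) : all (fun y => y <= sumn s) s.
Proof. elim: s => //= y s IH; rewrite leq_addr /=; apply: sub_all IH => z /= H; lia. Qed.
Section Main.
Variables (V : eqType) (p : V -> nat).

Lemma tsize_pos (t : tree V) : 0 < tsize t. Proof. by case: t. Qed.

Fixpoint chain (q : nat) (l : seq (tree V)) : Prop :=
  match l with
  | [::] => True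
  | x :: l' => p (root x) = q /\ chain (q + tsize x) l'
  end.

Lemma chain_split q l : chain q l ->
  forall l1 u l2, l = l1 ++ u :: l2 -> p (root u) = q + sumn (map (@tsize V) l1).
Proof.
elim: l q => [|x l IH] q /= H l1 u l2; first by case: l1.
case: H => H1 H2.
case: l1 => [|y l1] /=; first by case=> <- _; lia.
case=> <- E; rewrite (IH _ H2 _ _ _ E); lia.
Qed.

Lemma split_chain q l :
  (forall l1 u l2, l = l1 ++ u :: l2 -> p (root u) = q + sumn (map (@tsize V) l1)) ->
  chain q l.
Proof.
elim: l q => [|x l IH] q //= H; split.
  by rewrite (H [::] x l) //= addn0.
apply: IH => l1 u l2 E; rewrite (H (x :: l1) u l2) /=; [lia| by rewrite E].
Qed.

Lemma chain_cat q l1 l2 :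
  chain q (l1 ++ l2) <-> chain q l1 /\ chain (q + sumn (map (@tsize V) l1)) l2.
Proof.
elim: l1 q => [|x l1 IH] q /=; first by rewrite addn0; tauto.
rewrite IH addnA; tauto.
Qed.

Lemma chain_strict q l : chain q l -> sorted (fun a b => p (root a) < p (root b)) l.
Proof.
elim: l q => [|x l IH] q //= [H1 H2].
have S := IH _ H2; case: l H2 S {IH} => [|y l] //= [H3 H4] S; rewrite S andbT.
have := tsize_pos x; lia.
Qed.


Lemma sumn_Perm (f : tree V -> nat) l1 l2 : Permutation l1 l2 -> sumn (map f l1) = sumn (map f l2).
Proof. elim => //= *; lia. Qed.

Lemma light_first_child v cs c : light_first p (Node v cs) -> In c cs -> light_first p c.
Proof.
move=> H Hc u Hu; apply: H => /=; right; exact: In_flatten_map2 Hc Hu.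
Qed.

Lemma root_vt n t A : root (vt p n t A) = root t.
Proof. by case: n. Qed.

Lemma init_C_us v cs us :
  Permutation us cs -> chain (p v + 1) us -> init_C p (Node v cs) = us.
Proof.
move=> HP HC; apply: (@Perm_eq_sorted _ (fun a => p (root a))).
- apply: Permutation_trans (Permutation_sym HP); exact: Perm_sort.
- by apply: sort_sorted => a b; apply: leq_total.
- exact: chain_strict HC.
Qed.

Definition IHn n :=
  forall t A, light_first p t -> (forall a, In a A -> light_first p a) ->
  chain (p (root t) + tsize t) A -> sorted leq (map (@tsize V) (t :: A)) ->
  tsize t + sumn (map (@tsize V) A) <= n ->
  light_first p (vt p n t A) /\ tsize (vt p n t A) = tsize t + sumn (map (@tsize V) A).

Definition piece n (P : seq (tree V)) : seq (tree V) :=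
  if P is x :: xs then [:: vt p n x xs] else [::].

Lemma piece_ok n q P : IHn n ->
  (forall a, In a P -> light_first p a) -> chain q P -> sorted leq (map (@tsize V) P) ->
  sumn (map (@tsize V) P) <= n ->
  [/\ (forall k, In k (piece n P) -> light_first p k), chain q (piece n P) &
      map (@tsize V) (piece n P) = if P is nil then [::] else [:: sumn (map (@tsize V) P)]].
Proof.
move=> IH HL HC HS Hn; case: P HL HC HS Hn => [|x xs] HL HC HS Hn //=.
case: HC => H1 H2.
have [] := IH x xs.
- by apply: HL; left.
- by move=> a Ha; apply: HL; right.
- by rewrite H1.
- exact: HS.
- exact: Hn.
move=> Hlf Hsz; split => //.
- by move=> k [<-|].
- by rewrite root_vt.
- by rewrite Hsz.
Qed.

Lemma split_ok n q L : IHn n ->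
  (forall a, In a L -> light_first p a) -> chain q L -> sorted leq (map (@tsize V) L) ->
  sumn (map (@tsize V) L) <= n ->
  [/\ (forall k, In k (split_with (vt p n) L) -> light_first p k),
      chain q (split_with (vt p n) L),
      sorted leq (map (@tsize V) (split_with (vt p n) L)),
      sumn (map (@tsize V) (split_with (vt p n) L)) = sumn (map (@tsize V) L) &
      forall m, all (leq m) (map (@tsize V) L) ->
                all (leq m) (map (@tsize V) (split_with (vt p n) L))].
Proof.
move=> IH HL HC HS Hn.
set h := (size L)./2.
have E : split_with (vt p n) L = piece n (take h L) ++ piece n (drop h L) by [].
rewrite E; clear E.
have EL := cat_take_drop h L.
set T1 := take h L in EL *; set D1 := drop h L in EL *.
have HLT : forall a, In a T1 -> light_first p a.
  by move=> a Ha; apply: HL; rewrite -EL; apply: in_or_app; left.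
have HLD : forall a, In a D1 -> light_first p a.
  by move=> a Ha; apply: HL; rewrite -EL; apply: in_or_app; right.
rewrite -EL in HC; case/chain_cat: HC => HCT HCD.
have HS' := HS; rewrite -EL map_cat sorted_pairwise ?pairwise_cat in HS'; last exact: leq_trans.
case/and3P: HS' => _ PT PD.
rewrite -sorted_pairwise in PT; last exact: leq_trans.
rewrite -sorted_pairwise in PD; last exact: leq_trans.
have Hn' := Hn; rewrite -EL map_cat sumn_cat in Hn'.
have [|a1 b1 c1] := piece_ok IH HLT HCT PT; first lia.
have [|a2 b2 c2] := piece_ok IH HLD HCD PD; first lia.
have sT : sumn (map (@tsize V) (piece n T1)) = sumn (map (@tsize V) T1).
  by rewrite c1; case: (T1) => //= *; rewrite addn0.
have sD : sumn (map (@tsize V) (piece n D1)) = sumn (map (@tsize V) D1).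
  by rewrite c2; case: (D1) => //= *; rewrite addn0.
split.
- by move=> k /in_app_iff [Hk|Hk]; [apply: a1 | apply: a2].
- by apply/chain_cat; rewrite sT; split.
- rewrite map_cat c1 c2.
  case ET: T1 => [|x xs]; first by case: (D1).
  case ED: D1 => [|y ys].
    have : size D1 = 0 by rewrite ED.
    rewrite size_drop /h => H0.
    have HL0 : size L = 0 by have := odd_double_half (size L); lia.
    have : size T1 = 0 by rewrite /T1 size_take HL0 ltn0.
    by rewrite ET.
  have HH := half_sum HS; rewrite size_map -/h -map_take -map_drop -/T1 -/D1 ET ED in HH.
  by rewrite /= andbT.
- by rewrite map_cat sumn_cat sT sD -sumn_cat -map_cat EL.
- move=> m Hm; rewrite map_cat all_cat c1 c2; rewrite -EL map_cat all_cat in Hm.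
  case/andP: Hm => Hm1 Hm2.
  apply/andP; split.
  + case: (T1) Hm1 => //= x xs /andP[H1 _]; rewrite andbT; lia.
  + case: (D1) Hm2 => //= x xs /andP[H1 _]; rewrite andbT; lia.
Qed.

Lemma key n : IHn n.
Proof.
elim: n => [|n IH] t A H1 H2 H3 H4 H5.
  by have := tsize_pos t; lia.
case: t H1 H3 H4 H5 => v cs H1 H3 H4 H5.
have [us [HP [HS HC]]] : light_first_at p (Node v cs) by apply: H1; left.
have HCh : chain (p v + 1) us := @split_chain (p v + 1) us HC.
have EC := init_C_us HP HCh.
change (vt p n.+1 (Node v cs) A) with
  (Node v (split_with (vt p n) (init_C p (Node v cs)) ++ split_with (vt p n) A)).
rewrite EC.
have Ecs : tsize (Node v cs) = (sumn (map (@tsize V) us)).+1.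
  by rewrite /= (sumn_Perm _ HP).
have HLus : forall a, In a us -> light_first p a.
  by move=> a Ha; apply: (light_first_child H1); apply: Permutation_in HP Ha.
have HSus : sorted leq (map (@tsize V) us) by rewrite sorted_map.
have Hnus : sumn (map (@tsize V) us) <= n by rewrite Ecs in H5; lia.
have [a1 b1 c1 d1 e1] := split_ok IH HLus HCh HSus Hnus.
have H4' : sorted leq (map (@tsize V) A) by exact: path_sorted H4.
have HAge := order_path_min leq_trans H4.
have HnA : sumn (map (@tsize V) A) <= n by rewrite Ecs in H5; lia.
have [a2 b2 c2 d2 e2] := split_ok IH H2 H3 H4' HnA.
have e2' := e2 _ HAge.
have e1' := all_le_sumn (map (@tsize V) (split_with (vt p n) us)).
rewrite d1 in e1'.
split.
- move=> u /= [<-|Hu].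
  + exists (split_with (vt p n) us ++ split_with (vt p n) A).
    split; first exact: Permutation_refl.
    split.
    * have : sorted leq (map (@tsize V) (split_with (vt p n) us ++ split_with (vt p n) A)).
        rewrite map_cat sorted_pairwise ?pairwise_cat; last exact: leq_trans.
        rewrite -!sorted_pairwise ?c1 ?c2 ?andbT; try exact: leq_trans.
        apply/allrelP => x y Hx Hy.
        have := allP e1' x Hx; have := allP e2' y Hy; rewrite Ecs /=; lia.
      by rewrite sorted_map.
    * move=> us1 u0 us2 E; apply: (chain_split _ E).
      apply/chain_cat; split; first exact: b1.
      have -> : p (root (Node v (split_with (vt p n) us ++ split_with (vt p n) A))) + 1 +
        sumn (map (@tsize V) (split_with (vt p n) us)) = p (root (Node v cs)) + tsize (Node v cs).
        by rewrite d1 Ecs /=; lia.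
      exact: b2.
  + case: (In_flatten_map Hu) => k [Hk Hu'].
    by case/in_app_iff: Hk => Hk; [apply: (a1 k Hk) | apply: (a2 k Hk)].
- by rewrite /= map_cat sumn_cat d1 d2 (sumn_Perm _ HP) /=; lia.
Qed.

End Main.

Theorem mainTheorem5 (V : eqType) (p : V -> nat) (T : tree V) :
  uniq (vertices T) ->
  light_first p T ->
  light_first p (virtual_tree p T).
Proof.
move=> _ H.
have [] := @key V p (tsize T) T [::] H => //=; by rewrite addn0.
Qed.
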